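(* Let $\mathcal{C}$ be a polyhedral complex with finitely many cells, each a convex polyhedron embedded in some Euclidean space, with injective isometric attaching maps, equipped with the induced Euclidean metric on each cell. Let $P_1,F_1,P_2,F_2,\dots,F_{k-1},P_k$ be a sequence of cells of $\mathcal{C}$ with $F_i\subseteq P_i\cap P_{i+1}$ for $i=1,\dots,k-1$, and let $x\in P_1$, $y\in P_k$. Let $p_0=x$, $p_k=y$ and $p_i\in F_i^\circ$ for $1\le i\le k-1$, where $F^\circ$ denotes the relative interior of $F$. Then the path formed by the segments $[p_{i-1},p_i]\subseteq P_i$ is the shortest path from $x$ to $y$ among paths passing through this sequence of cells and faces if and only if, for $i=1,\dots,k-1$, \[\pi_{F_i}\left(\frac{p_i-p_{i-1}}{\|p_i-p_{i-1}\|}\right)=\pi_{F_i}\left(\frac{p_{i+1}-p_i}{\|p_{i+1}-p_i\|}\right),\] where $\|\cdot\|$ is the Euclidean norm and $\pi_{F_i}$ denotes orthogonal projection onto the linear subspace parallel to the affine span of $F_i$ (the vector $p_i-p_{i-1}$ being computed in the Euclidean space of $P_i$ and $p_{i+1}-p_i$ in that of $P_{i+1}$, with the projections compared via the isometric identification of $F_i$).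
   Context: A path passing through the sequence of cells and faces means a path from $x$ to $y$ consisting of segments $[q_{i-1},q_i]\subseteq P_i$ with $q_0=x$, $q_k=y$, $q_i\in F_i$ for $1\le i\le k-1$; its length is $\sum_{i=1}^k\|q_i-q_{i-1}\|$. *)

(* Defs.v *)
From HB Require Import structures.
From mathcomp Require Import all_boot all_order all_algebra.
From mathcomp Require Import boolp classical_sets reals.

Set Implicit Arguments.
Unset Strict Implicit.
Unset Printing Implicit Defensive.
Import Order.TTheory GRing.Theory Num.Theory.
Local Open Scope ring_scope.
Local Open Scope classical_set_scope.

Section Defs.
Variable R : realType.

Definition dotv n (u v : 'rV[R]_n) : R := \sum_(j < n) u 0 j * v 0 j.
Definition normv n (v : 'rV[R]_n) : R := Num.sqrt (dotv v v).
Definition unitv n (v : 'rV[R]_n) : 'rV[R]_n := (normv v)^-1 *: v.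

Definition segment n (u v : 'rV[R]_n) : set 'rV[R]_n :=
  [set w | exists2 t : R, 0 <= t <= 1 & w = u + t *: (v - u)].

Definition polyhedron n (P : set 'rV[R]_n) : Prop :=
  exists m (A : 'M[R]_(m, n)) (b : 'rV[R]_m),
    P = [set x | forall i : 'I_m, dotv (row i A) x <= b 0 i].

Definition is_face n (G P : set 'rV[R]_n) : Prop :=
  exists (a : 'rV[R]_n) (c : R),
    (forall x, P x -> dotv a x <= c) /\ G = [set x | P x /\ dotv a x = c].

(** linear subspace parallel to the affine span of F: span of {a - b | a,b in F} *)
Definition dir n (F : set 'rV[R]_n) : set 'rV[R]_n :=
  [set v | exists m (c : 'I_m -> R) (a b : 'I_m -> 'rV[R]_n),
      (forall i, F (a i) /\ F (b i)) /\ v = \sum_(i < m) c i *: (a i - b i)].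

Definition relint n (F : set 'rV[R]_n) : set 'rV[R]_n :=
  [set x | F x /\ exists2 eps : R, 0 < eps &
             forall v, dir F v -> normv v < eps -> F (x + v)].

Definition orthproj n (L : set 'rV[R]_n) (v : 'rV[R]_n) : 'rV[R]_n :=
  xget 0 [set w | L w /\ forall l, L l -> dotv (v - w) l = 0].

(** A chain of cells and faces P_0, F_0, P_1, F_1, ..., F_(m-1), P_m
    (the paper's P_1,F_1,...,F_(k-1),P_k with k = m+1, shifted to start at 0).  Face F_j lives in R^(d j) and is attached to
    P_j by the affine map w |-> w A_j + a_j and to P_(j+1) by w |-> w B_j + b_j. *)
Unset Implicit Arguments.
Record chain := Chain {
  ch_m : nat;
  ch_n : nat -> nat;
  ch_P : forall j, set 'rV[R]_(ch_n j);
  ch_d : nat -> nat;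
  ch_F : forall j, set 'rV[R]_(ch_d j);
  ch_A : forall j, 'M[R]_(ch_d j, ch_n j);
  ch_a : forall j, 'rV[R]_(ch_n j);
  ch_B : forall j, 'M[R]_(ch_d j, (ch_n j.+1));
  ch_b : forall j, 'rV[R]_(ch_n j.+1) }.

Definition embl (C : chain) j (w : 'rV[R]_(ch_d C j)) : 'rV[R]_(ch_n C j) :=
  w *m ch_A C j + ch_a C j.
Definition embr (C : chain) j (w : 'rV[R]_(ch_d C j)) : 'rV[R]_(ch_n C j.+1) :=
  w *m ch_B C j + ch_b C j.

(** Well-formedness: cells are convex polyhedra; attaching maps are affine
    isometries (orthonormal rows); F_j is (isometrically identified with) a
    face of both P_j and P_(j+1). *)
Definition wf_chain (C : chain) : Prop :=
  (forall j, (j <= ch_m C)%N -> polyhedron (ch_P C j)) /\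
  (forall j, (j < ch_m C)%N ->
     ch_A C j *m (ch_A C j)^T = 1%:M /\ ch_B C j *m (ch_B C j)^T = 1%:M /\
     is_face (embl C j @` ch_F C j) (ch_P C j) /\
     is_face (embr C j @` ch_F C j) (ch_P C j.+1)).

(** A path from x to y through the chain, described by the start point s j and
    end point e j of its segment inside P_j (j = 0..m), in P_j's coordinates:
    s 0 = x, e m = y, e j and s (j+1) are the same point q_j of F_j,
    and [s j, e j] is contained in P_j. *)
Definition chain_path (C : chain) (x : 'rV[R]_(ch_n C 0))
  (y : 'rV[R]_(ch_n C (ch_m C))) (s e : forall j, 'rV[R]_(ch_n C j)) : Prop :=
  s 0%N = x /\ e (ch_m C) = y /\
  (forall j, (j < ch_m C)%N ->
     exists2 w, ch_F C j w & e j = embl C j w /\ s j.+1 = embr C j w) /\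
  (forall j, (j <= ch_m C)%N -> segment (s j) (e j) `<=` ch_P C j).

Definition chain_length (C : chain) (s e : forall j, 'rV[R]_(ch_n C j)) : R :=
  \sum_(0 <= j < (ch_m C).+1) normv (e j - s j).

Definition shortest_chain_path (C : chain) x y (s e : forall j, 'rV[R]_(ch_n C j)) :=
  chain_path C x y s e /\
  forall s' e', chain_path C x y s' e' -> chain_length C s e <= chain_length C s' e'.

End Defs.

Arguments Chain {R}.
Arguments ch_m {R}. Arguments ch_n {R}. Arguments ch_P {R}. Arguments ch_d {R}.
Arguments ch_F {R}. Arguments ch_A {R}. Arguments ch_a {R}. Arguments ch_B {R}.
Arguments ch_b {R}.
Arguments embl {R}. Arguments embr {R}. Arguments wf_chain {R}.
Arguments chain_path {R}. Arguments chain_length {R}.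
Arguments shortest_chain_path {R}.

(* Main.v *)
Require Import Defs.
From HB Require Import structures.
From mathcomp Require Import all_boot all_order all_algebra.
From mathcomp Require Import boolp classical_sets reals.
From mathcomp Require Import ring lra zify.
Import Order.TTheory GRing.Theory Num.Theory.
Set Implicit Arguments. Unset Strict Implicit.
Local Open Scope ring_scope.
Local Open Scope classical_set_scope.

Section Dot.
Variable R : realType.
Variable n : nat.
Implicit Types u v w : 'rV[R]_n.

Lemma dotvC u v : dotv u v = dotv v u.
Proof. by apply: eq_bigr => j _; rewrite mulrC. Qed.
Lemma dotvDl u v w : dotv (u + v) w = dotv u w + dotv v w.
Proof. by rewrite /dotv -big_split; apply: eq_bigr => j _; rewrite !mxE mulrDl. Qed.
Lemma dotvZl k u w : dotv (k *: u) w = k * dotv u w.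
Proof. by rewrite /dotv mulr_sumr; apply: eq_bigr => j _; rewrite !mxE mulrA. Qed.
Lemma dotvNl u w : dotv (- u) w = - dotv u w.
Proof. by rewrite -scaleN1r dotvZl mulN1r. Qed.
Lemma dotvBl u v w : dotv (u - v) w = dotv u w - dotv v w.
Proof. by rewrite dotvDl dotvNl. Qed.
Lemma dotvDr u v w : dotv w (u + v) = dotv w u + dotv w v.
Proof. by rewrite !(dotvC w) dotvDl. Qed.
Lemma dotvZr k u w : dotv w (k *: u) = k * dotv w u.
Proof. by rewrite !(dotvC w) dotvZl. Qed.
Lemma dotvBr u v w : dotv w (u - v) = dotv w u - dotv w v.
Proof. by rewrite !(dotvC w) dotvBl. Qed.
Lemma dotv0l w : dotv 0 w = 0.
Proof. by rewrite -(scale0r 0) dotvZl mul0r. Qed.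
Lemma dotv0r w : dotv w 0 = 0.
Proof. by rewrite dotvC dotv0l. Qed.
Lemma dotv_ge0 v : 0 <= dotv v v.
Proof. by apply: sumr_ge0 => j _; rewrite -expr2 sqr_ge0. Qed.
Lemma dotv_eq0 v : dotv v v = 0 -> v = 0.
Proof.
move=> /eqP; rewrite psumr_eq0; last by move=> j _; rewrite -expr2 sqr_ge0.
move=> /allP H; apply/rowP => j; rewrite mxE.
have := H j (mem_index_enum j); rewrite -expr2 sqrf_eq0 => /eqP.
by [].

Qed.
Lemma dotvE u v : dotv u v = (u *m v^T) 0 0.
Proof. by rewrite !mxE; apply: eq_bigr => j _; rewrite !mxE. Qed.
End Dot.

Lemma dotv_mulmx (R : realType) d n (u : 'rV[R]_d) (A : 'M[R]_(d, n)) w :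
  dotv (u *m A) w = dotv u (w *m A^T).
Proof. by rewrite !dotvE trmx_mul trmxK mulmxA. Qed.

Section Proj.
Variable R : realType.
Variable n : nat.
Implicit Types u v w : 'rV[R]_n.

Lemma proj_span (X : seq 'rV[R]_n) v :
  exists w, w \in <<X>>%VS /\ forall l, l \in <<X>>%VS -> dotv (v - w) l = 0.
Proof.
elim: X v => [|x X IH] v.
  exists 0; split; first by rewrite mem0v.
  by move=> l; rewrite span_nil memv0 => /eqP ->; rewrite dotv0r.
have [p [Xp Op]] := IH v; have [q [Xq Oq]] := IH x.
pose r := x - q; pose c := dotv (v - p) r / dotv r r.
have key : dotv (v - p) r - c * dotv r r = 0.
  have [r0|r0] := eqVneq (dotv r r) 0.
    by rewrite r0 (dotv_eq0 r0) dotv0r mulr0 subrr.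
  by rewrite /c mulfVK // subrr.
have rX l : l \in <<X>>%VS -> dotv r l = 0 by move=> /Oq.
have sub : (<<X>> <= <<x :: X>>)%VS by rewrite span_cons addvSr.
have xin : x \in <<x :: X>>%VS by rewrite memv_span // mem_head.
exists (p + c *: r); split.
  rewrite memvD ?memvZ //; first exact: (subvP sub).
  by rewrite memvB //; apply: (subvP sub).
move=> l; rewrite span_cons => /memv_addP [u /vlineP [k ->] [l2 Xl2 ->]].
rewrite dotvDr dotvZr.
have -> : dotv (v - (p + c *: r)) l2 = 0.
  by rewrite opprD addrA dotvDl (Op _ Xl2) dotvNl dotvZl (rX _ Xl2) mulr0 subr0.
have -> : x = q + r by rewrite /r addrC subrK.
rewrite dotvDr opprD addrA dotvDl (Op _ Xq) dotvNl dotvZl (rX _ Xq) mulr0 subr0 add0r.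
by rewrite dotvDl dotvNl dotvZl key mulr0 addr0.
Qed.

Lemma dir_closed0 (F : set 'rV[R]_n) : dir F 0.
Proof. by exists 0%N, (fun _ => 0), (fun _ => 0), (fun _ => 0); split; [by case | by rewrite big_ord0]. Qed.

Lemma dir_closedD (F : set 'rV[R]_n) u v : dir F u -> dir F v -> dir F (u + v).
Proof.
move=> [m1 [c1 [a1 [b1 [H1 ->]]]]] [m2 [c2 [a2 [b2 [H2 ->]]]]].
pose f (T : Type) (g1 : 'I_m1 -> T) (g2 : 'I_m2 -> T) (i : 'I_(m1 + m2)) :=
  match split i with inl i1 => g1 i1 | inr i2 => g2 i2 end.
exists (m1 + m2)%N, (f _ c1 c2), (f _ a1 a2), (f _ b1 b2); split.
  by move=> i; rewrite /f; case: split.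
rewrite big_split_ord /f; congr (_ + _); apply: eq_bigr => i _.
  by rewrite (unsplitK (inl i)).
by rewrite (unsplitK (inr i)).
Qed.

Lemma dir_closedZ (F : set 'rV[R]_n) k u : dir F u -> dir F (k *: u).
Proof.
move=> [m [c [a [b [H ->]]]]].
exists m, (fun i => k * c i), a, b; split => //.
by rewrite scaler_sumr; apply: eq_bigr => i _; rewrite scalerA.
Qed.

Lemma dir_span (F : set 'rV[R]_n) (X : seq 'rV[R]_n) :
  (forall x, x \in X -> dir F x) -> forall v, v \in <<X>>%VS -> dir F v.
Proof.
elim: X => [|x X IH] HX v.
  by rewrite span_nil memv0 => /eqP ->; apply: dir_closed0.
rewrite span_cons => /memv_addP [u /vlineP [k ->] [l2 Xl2 ->]].
apply: dir_closedD; first by apply: dir_closedZ; apply: HX; rewrite mem_head.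
by apply: IH => // y Xy; apply: HX; rewrite inE Xy orbT.
Qed.

Lemma dir_basis (F : set 'rV[R]_n) :
  exists X : seq 'rV[R]_n, (forall x, x \in X -> dir F x) /\
    forall v, dir F v -> v \in <<X>>%VS.
Proof.
suff H : forall k (X : seq 'rV[R]_n), (\dim (@fullv R 'rV[R]_n) - size X <= k)%N ->
   free X -> (forall x, x \in X -> dir F x) ->
   exists X : seq 'rV[R]_n, (forall x, x \in X -> dir F x) /\
    forall v, dir F v -> v \in <<X>>%VS.
  by apply: (H _ [::]) => //; exact: nil_free.
elim=> [|k IH] X Hk fX HX.
- exists X; split => // v Fv; apply/negPn/negP => vX.
  have fvX : free (v :: X) by rewrite free_cons vX.
  have : (size (v :: X) <= \dim (@fullv R 'rV[R]_n))%N.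
    by rewrite -(eqP fvX); apply: dimvS; apply: subvf.
  move=> /= H; move: Hk H; lia.
- have [[v [Fv vX]]|] := pselect (exists v, dir F v /\ v \notin <<X>>%VS).
    have fvX : free (v :: X) by rewrite free_cons vX.
    apply: (IH (v :: X)) => //.
      have : (size (v :: X) <= \dim (@fullv R 'rV[R]_n))%N.
        by rewrite -(eqP fvX); apply: dimvS; apply: subvf.
      move=> /= H; move: Hk H; lia.
    by move=> y; rewrite inE => /orP [/eqP ->|]; [|apply: HX].
  move=> NE; exists X; split => // v Fv; apply/negPn/negP => vX.
  by apply: NE; exists v.
Qed.

Lemma proj_dir (F : set 'rV[R]_n) v :
  exists w, dir F w /\ forall l, dir F l -> dotv (v - w) l = 0.
Proof.
have [X [HX HF]] := dir_basis F.
have [w [Xw Ow]] := proj_span X v.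
exists w; split; first exact: (dir_span HX).
by move=> l /HF; apply: Ow.
Qed.
End Proj.


Section Norm.
Variable R : realType.
Variable n : nat.
Implicit Types u v w a b h : 'rV[R]_n.

Lemma normv_ge0 v : 0 <= normv v. Proof. exact: sqrtr_ge0. Qed.
Lemma normv_sq v : normv v ^+ 2 = dotv v v.
Proof. by rewrite sqr_sqrtr // dotv_ge0. Qed.
Lemma normv_gt0 v : v != 0 -> 0 < normv v.
Proof.
move=> v0; rewrite sqrtr_gt0 lt_def dotv_ge0 andbT.
by apply/eqP => /dotv_eq0 /eqP; apply/negP.
Qed.

Lemma cauchy_schwarz u v : dotv u v <= normv u * normv v.
Proof.
have [->|u0] := eqVneq u 0; first by rewrite dotv0l mulr_ge0 // normv_ge0.
have [->|v0] := eqVneq v 0; first by rewrite dotv0r mulr_ge0 // normv_ge0.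
have a0 := normv_gt0 u0; have b0 := normv_gt0 v0.
have := dotv_ge0 (normv v *: u - normv u *: v).
rewrite !dotvBl !dotvBr !dotvZl !dotvZr -!normv_sq (dotvC v u).
set a := normv u; set b := normv v; set d := dotv u v => H.
have H2 : 0 <= 2 * (a * b) * (a * b - d) by nra.
have ab : 0 < 2 * (a * b) by rewrite mulr_gt0 // mulr_gt0.
move: H2; rewrite pmulr_rge0 //; lra.
Qed.

Lemma unitv_self a : a != 0 -> dotv (unitv a) a = normv a.
Proof.
move=> a0; rewrite /unitv dotvZl -normv_sq expr2 mulrA mulVf ?mul1r //.
by rewrite gt_eqF // normv_gt0.
Qed.

Lemma unitv_le a b : a != 0 -> dotv (unitv a) b <= normv b.
Proof.
move=> a0; rewrite /unitv dotvZl.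
have a1 := normv_gt0 a0.
rewrite ler_pdivrMl //; exact: cauchy_schwarz.
Qed.

Lemma est a (t : R) vv : a != 0 ->
  normv (a + t *: vv) <= normv a + t * dotv (unitv a) vv + t ^+ 2 * (dotv vv vv / (2 * normv a)).
Proof.
move=> a0; have N0 := normv_gt0 a0.
have Q2 : normv (a + t *: vv) ^+ 2 = normv a ^+ 2 + 2 * t * dotv a vv + t ^+ 2 * dotv vv vv.
  rewrite !normv_sq !dotvDl !dotvDr !dotvZl !dotvZr (dotvC vv a); ring.
have -> : normv a + t * dotv (unitv a) vv + t ^+ 2 * (dotv vv vv / (2 * normv a))
   = (normv a ^+ 2 + normv (a + t *: vv) ^+ 2) / (2 * normv a).
  rewrite Q2 /unitv dotvZl; field; by rewrite gt_eqF.
rewrite ler_pdivlMr; last by rewrite mulr_gt0.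
set Q := normv (a + t *: vv); set N := normv a.
rewrite -subr_ge0 (_ : _ - _ = (N - Q) ^+ 2) ?sqr_ge0 //; ring.
Qed.

Lemma normv_lt v (eps : R) : 0 < eps -> dotv v v < eps ^+ 2 -> normv v < eps.
Proof.
move=> e0 H; rewrite -[eps]ger0_norm ?ltW // -sqrtr_sqr ltr_sqrt //.
by rewrite exprn_gt0.
Qed.
End Norm.

Lemma crit (R : realType) (c K N eps : R) : 0 <= K -> 0 <= N -> 0 < eps ->
  (forall t, t ^+ 2 * N < eps ^+ 2 -> 0 <= t * c + t ^+ 2 * K) -> c = 0.
Proof.
move=> K0 N0 e0 H; apply/eqP; apply: contraT => c0; exfalso.
have e2 : 0 < eps ^+ 2 by rewrite exprn_gt0.
pose D := 2 + K + c ^+ 2 * N / eps ^+ 2.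
have cN : 0 <= c ^+ 2 * N / eps ^+ 2 by apply: divr_ge0; [apply: mulr_ge0 => //; apply: sqr_ge0 | apply: ltW].
have D2 : 2 <= D by rewrite /D; lra.
have eD : eps ^+ 2 * D = 2 * eps ^+ 2 + K * eps ^+ 2 + c ^+ 2 * N.
  rewrite /D; field; by rewrite gt_eqF.
pose tau := D^-1.
have tD : tau * D = 1 by rewrite /tau mulVf // gt_eqF //; lra.
have t0 : 0 < tau by rewrite /tau invr_gt0; lra.
have c2 : 0 < c ^+ 2 by rewrite lt_def sqr_ge0 sqrf_eq0 c0.
have p1 : 0 <= tau * (D - 2) by apply: mulr_ge0; [apply: ltW | lra].
have t1 : tau <= 1.
  move: p1; rewrite mulrBr tD; lra.
have p2 : 0 < tau * (D - K) by apply: mulr_gt0 => //; rewrite /D; lra.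
have tK : tau * K < 1.
  move: p2; rewrite mulrBr tD; lra.
have tN : tau * (c ^+ 2 * N) < eps ^+ 2.
  have : c ^+ 2 * N < eps ^+ 2 * D by rewrite eD; nra.
  nra.
have := H (- c * tau).
have -> : (- c * tau) ^+ 2 * N = tau * (tau * (c ^+ 2 * N)) by ring.
have -> : - c * tau * c + (- c * tau) ^+ 2 * K = c ^+ 2 * tau * (tau * K - 1) by ring.
have h1 : tau * (tau * (c ^+ 2 * N)) < eps ^+ 2.
  have : 0 <= tau * (c ^+ 2 * N) by apply: mulr_ge0; [apply: ltW | apply: mulr_ge0 => //; apply: sqr_ge0].
  nra.
move=> /(_ h1).
have : 0 < c ^+ 2 * tau by rewrite mulr_gt0.
nra.
Qed.


Lemma polyhedron_convex (R : realType) n (P : set 'rV[R]_n) u v :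
  polyhedron P -> P u -> P v -> segment u v `<=` P.
Proof.
move=> [m [A [b ->]]] Pu Pv w [t /andP [t0 t1] ->] i.
rewrite dotvDr dotvZr dotvBr.
have := Pu i; have := Pv i; nra.
Qed.

Lemma face_sub (R : realType) n (G P : set 'rV[R]_n) : is_face G P -> G `<=` P.
Proof. by move=> [a [c [_ ->]]] x []. Qed.

Lemma orthproj_eq (R : realType) d (F : set 'rV[R]_d) a b :
  orthproj (dir F) a = orthproj (dir F) b <->
  forall l, dir F l -> dotv (a - b) l = 0.
Proof.
split.
  move=> E l Fl.
  have [_ Ha'] : dir F (orthproj (dir F) a) /\
     forall l, dir F l -> dotv (a - orthproj (dir F) a) l = 0.
    exact: (xgetPex 0 (proj_dir F a)).
  have [_ Hb'] : dir F (orthproj (dir F) b) /\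
     forall l, dir F l -> dotv (b - orthproj (dir F) b) l = 0.
    exact: (xgetPex 0 (proj_dir F b)).
  rewrite E in Ha'.
  have -> : a - b = (a - orthproj (dir F) b) - (b - orthproj (dir F) b).
    by rewrite opprB addrA subrK.
  by rewrite dotvBl Ha' // Hb' // subrr.
move=> H; rewrite /orthproj; congr xget.
apply/funext => w; apply/propext; split => -[Fw Hw]; split => // l Fl.
  have -> : b - w = (a - w) - (a - b) by rewrite [in RHS]opprB [in RHS]addrC [in RHS]addrA subrK.
  by rewrite dotvBl Hw // H // subrr.
have -> : a - w = (b - w) + (a - b) by rewrite [in RHS]addrC [in RHS]addrA subrK.
by rewrite dotvDl Hw // H // addr0.
Qed.


Definition upd (T : nat -> Type) (f : forall k, T k) (j : nat) (x : T j) : forall k, T k :=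
  fun k => match eq_comparable j k with left E => eq_rect j T x k E | right _ => f k end.
Arguments upd {T} f j x _.

Lemma upd_eq (T : nat -> Type) (f : forall k, T k) j x : upd f j x j = x.
Proof.
rewrite /upd; case: eq_comparable => [E|//].
by rewrite (eq_irrelevance E erefl).
Qed.

Lemma upd_neq (T : nat -> Type) (f : forall k, T k) j x k : k <> j -> upd f j x k = f k.
Proof. by move=> nkj; rewrite /upd; case: eq_comparable => // E; case: nkj. Qed.

Lemma embl_in (R : realType) (C : chain R) k w : wf_chain C -> (k < ch_m C)%N ->
  ch_F C k w -> ch_P C k (embl C k w).
Proof.
move=> [_ H] km Fw; have [_ [_ [H1 _]]] := H k km.
by apply: (face_sub H1); exists w.
Qed.

Lemma embr_in (R : realType) (C : chain R) k w : wf_chain C -> (k < ch_m C)%N ->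
  ch_F C k w -> ch_P C k.+1 (embr C k w).
Proof.
move=> [_ H] km Fw; have [_ [_ [_ H1]]] := H k km.
by apply: (face_sub H1); exists w.
Qed.

Lemma mk_path (R : realType) (C : chain R) x y (s e : forall k, 'rV[R]_(ch_n C k))
  (w : forall k, 'rV[R]_(ch_d C k)) : wf_chain C ->
  ch_P C 0 x -> ch_P C (ch_m C) y -> s 0%N = x -> e (ch_m C) = y ->
  (forall k, (k < ch_m C)%N -> ch_F C k (w k) /\ e k = embl C k (w k) /\ s k.+1 = embr C k (w k)) ->
  chain_path C x y s e.
Proof.
move=> wf Px Py s0 em H; split => //; split => //; split.
  by move=> k /H [Fw [E1 E2]]; exists (w k).
move=> k km; have [Pw _] := wf; apply: polyhedron_convex; first exact: Pw.
  case: k km => [|k] km; first by rewrite s0.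
  have [Fw [_ ->]] := H k km; exact: embr_in.
have [Ek|nk] := eqVneq k (ch_m C).
  by subst k; rewrite em.
have km' : (k < ch_m C)%N by rewrite ltn_neqAle nk.
by have [Fw [-> _]] := H k km'; apply: embl_in.
Qed.

Lemma sum_delta (R : realType) (N j : nat) (c : R) : (j < N)%N ->
  \sum_(0 <= k < N) (if k == j then c else 0) = c.
Proof. by move=> jN; rewrite -big_mkcond big_nat1_eq /= jN. Qed.

Lemma sum_two (R : realType) (N j : nat) (f f' : nat -> R) : (j.+1 < N)%N ->
  (forall k, k != j -> k != j.+1 -> f' k = f k) ->
  \sum_(0 <= k < N) f' k = \sum_(0 <= k < N) f k + (f' j - f j) + (f' j.+1 - f j.+1).
Proof.
move=> jN H.
have -> : \sum_(0 <= k < N) f' k = \sum_(0 <= k < N) (f k +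
   ((if k == j then f' j - f j else 0) + (if k == j.+1 then f' j.+1 - f j.+1 else 0))).
  apply: eq_bigr => k _.
  have [->|nj] := eqVneq k j; first by rewrite (ltn_eqF (ltnSn j)) addr0 addrC subrK.
  have [->|nj1] := eqVneq k j.+1; first by rewrite ?(gtn_eqF (ltnSn j)) add0r addrC subrK.
  by rewrite !addr0 H.
rewrite big_split big_split /= sum_delta ?sum_delta //; last by apply: ltnW.
by rewrite addrA.
Qed.


Unset Implicit Arguments. Set Strict Implicit.

Lemma dir_diff (R : realType) n (F : set 'rV[R]_n) a b : F a -> F b -> dir F (a - b).
Proof.
move=> Fa Fb; exists 1%N, (fun _ => 1), (fun _ => a), (fun _ => b); split => //.
by rewrite big_ord1 scale1r.
Qed.

Lemma embl_diff (R : realType) (C : chain R) k w w' :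
  embl C k w' - embl C k w = (w' - w) *m ch_A C k.
Proof. by rewrite /embl mulmxBl opprD addrACA subrr addr0. Qed.
Lemma embr_diff (R : realType) (C : chain R) k w w' :
  embr C k w' - embr C k w = (w' - w) *m ch_B C k.
Proof. by rewrite /embr mulmxBl opprD addrACA subrr addr0. Qed.

Theorem lemma5p1 (R : realType) (C : chain R)
  (x : 'rV[R]_(ch_n C 0)) (y : 'rV[R]_(ch_n C (ch_m C)))
  (z : forall j, 'rV[R]_(ch_d C j)) (s e : forall j, 'rV[R]_(ch_n C j)) :
  wf_chain C ->
  ch_P C 0 x -> ch_P C (ch_m C) y ->
  (forall j, (j < ch_m C)%N -> relint (ch_F C j) (z j)) ->
  s 0%N = x -> e (ch_m C) = y ->
  (forall j, (j < ch_m C)%N -> e j = embl C j (z j) /\ s j.+1 = embr C j (z j)) ->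
  (forall j, (j <= ch_m C)%N -> e j != s j) ->
  (shortest_chain_path C x y s e <->
   forall j, (j < ch_m C)%N ->
     orthproj (dir (ch_F C j)) (unitv (e j - s j) *m (ch_A C j)^T) =
     orthproj (dir (ch_F C j)) (unitv (e j.+1 - s j.+1) *m (ch_B C j)^T)).
Proof.
move=> wf Px Py Hz s0 em Hse Hne.
have Pth : chain_path C x y s e.
  apply: (mk_path (w := z)) => // k km.
  by have [Fz _] := Hz k km; have [E1 E2] := Hse k km.
split.
- move=> [_ Short] j jm; apply/orthproj_eq => l Fl.
  have [Fz [eps e0 Heps]] := Hz j jm.
  have nea : e j - s j != 0 by rewrite subr_eq0 Hne // ltnW.
  have neb : e j.+1 - s j.+1 != 0 by rewrite subr_eq0 Hne.
  set ua := unitv (e j - s j); set ub := unitv (e j.+1 - s j.+1).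
  set A := ch_A C j; set B := ch_B C j.
  set ca := dotv ua (l *m A); set cb := dotv ub (- (l *m B)).
  set K := dotv (l *m A) (l *m A) / (2 * normv (e j - s j)) +
           dotv (- (l *m B)) (- (l *m B)) / (2 * normv (e j.+1 - s j.+1)).
  have K0 : 0 <= K.
    have := normv_gt0 nea; have := normv_gt0 neb => n1 n2.
    by rewrite addr_ge0 // divr_ge0 ?dotv_ge0 // ltW // mulr_gt0.
  have c0 : ca + cb = 0.
    apply: (crit K0 (dotv_ge0 l) e0) => t Ht.
    pose w' := upd z j (z j + t *: l).
    pose e' := upd e j (e j + (t *: l) *m A).
    pose s' := upd s j.+1 (s j.+1 + (t *: l) *m B).
    have P' : chain_path C x y s' e'.
      apply: (mk_path (w := w') wf Px Py).
      + by rewrite /s' upd_neq.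
      + rewrite /e' upd_neq // => E; by rewrite E ltnn in jm.
      move=> k km; have [Ekj|nkj] := eqVneq k j.
        subst k; rewrite /w' /e' /s' !upd_eq; split.
          apply: Heps; first exact: dir_closedZ.
          apply: normv_lt => //; rewrite dotvZl dotvZr mulrA -expr2; done.
        have [E1 E2] := Hse j jm.
        split; [by rewrite E1 /embl mulmxDl addrAC | by rewrite E2 /embr mulmxDl addrAC].
      have nkj' : k <> j by apply/eqP.
      have nkj1 : k.+1 <> j.+1 by case.
      rewrite /w' /e' /s' !upd_neq //.
      by have [Fz' _] := Hz k km; have [E1 E2] := Hse k km.
    have := Short s' e' P'.
    rewrite /chain_length (@sum_two R _ j (fun k => normv (e k - s k))
        (fun k => normv (e' k - s' k))) //; last first.
      move=> k nj nj1; rewrite /e' /s' !upd_neq //; [by move/eqP: nj1 | by move/eqP: nj].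
    rewrite /e' /s' upd_eq upd_neq; last by move=> /eqP; rewrite (ltn_eqF (ltnSn j)).
    rewrite upd_eq upd_neq; last by move=> /eqP; rewrite (gtn_eqF (ltnSn j)).
    rewrite -!scalemxAl (addrAC (e j)) opprD -scalerN (addrA (e j.+1)).
    have h1 := est t (l *m A) nea; have h2 := est t (- (l *m B)) neb.
    rewrite -/ua -/ub -/ca -/cb in h1 h2.
    move: h1 h2; rewrite /K mulrDr mulrDr.
    set L := \sum_(0 <= k < (ch_m C).+1) _.
    set Q1 := normv _; set Q2 := normv _.
    set K1 := _ / _; set K2 := _ / _.
    lra.
  rewrite dotvBl -(dotvC l) -(dotvC l) -!dotv_mulmx.
  move: c0; rewrite /ca /cb dotvC (dotvC ub) dotvNl; lra.
- move=> H; split => // s' e' P'.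
  have Hg : forall j, (j < ch_m C)%N -> forall l, dir (ch_F C j) l ->
      dotv (unitv (e j - s j) *m (ch_A C j)^T - unitv (e j.+1 - s j.+1) *m (ch_B C j)^T) l = 0.
    by move=> j jm; apply/orthproj_eq; apply: H.
  have [s'0 [e'm [Hw _]]] := P'.
  rewrite /chain_length.
  apply: (@le_trans _ _ (\sum_(0 <= k < (ch_m C).+1) dotv (unitv (e k - s k)) (e' k - s' k))); last first.
    rewrite big_nat_cond [leRHS]big_nat_cond; apply: ler_sum => k /andP [/andP [_ Hk] _].
    by apply: unitv_le; rewrite subr_eq0 Hne.
  have E : forall k, (k <= ch_m C)%N -> dotv (unitv (e k - s k)) (e' k - s' k) =
     normv (e k - s k) + (dotv (unitv (e k - s k)) (e' k - e k) - dotv (unitv (e k - s k)) (s' k - s k)).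
    move=> k km; rewrite -unitv_self; last by rewrite subr_eq0 Hne.
    rewrite !dotvBr; ring.
  have S : \sum_(0 <= k < (ch_m C).+1) dotv (unitv (e k - s k)) (e' k - s' k) =
     \sum_(0 <= k < (ch_m C).+1) normv (e k - s k) +
     \sum_(0 <= k < (ch_m C).+1) (dotv (unitv (e k - s k)) (e' k - e k) - dotv (unitv (e k - s k)) (s' k - s k)).
    rewrite -big_split; apply: eq_big_nat => k /andP [_ Hk].
    exact: E.
  rewrite S -[leLHS]addr0 lerD2l sumrB.
  rewrite big_nat_recr //= big_nat_recl //= e'm em s'0 s0 !subrr !dotv0r addr0 add0r.
  rewrite -sumrB big_nat_cond big1 ?addr0 // => k /andP [/andP [_ km] _].
  have [w' Fw' [E1 E2]] := Hw k km; have [E3 E4] := Hse k km.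
  have D1 : e' k - e k = (w' - z k) *m ch_A C k by rewrite E1 E3 embl_diff.
  have D2 : s' k.+1 - s k.+1 = (w' - z k) *m ch_B C k by rewrite E2 E4 embr_diff.
  rewrite D1 D2 !(dotvC (unitv _)) !dotv_mulmx -dotvBr dotvC.
  apply: Hg => //; apply: dir_diff => //; by have [] := Hz k km.
Qed.
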